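(* Let $(X,d,\mu)$ be a coarse median space in which rank at most $1$ is achieved under parameters $\rho,H$. Then for any $\zeta\geqslant0$, setting $\zeta'=2H(4)+\zeta$, for all $a,b,c\in X$, $$\mathcal N_\zeta([a,b])\subseteq\mathcal N_{\zeta'}([a,c])\cup\mathcal N_{\zeta'}([c,b]).$$
   Context: Write $x\sim_s y$ if $d(x,y)\leqslant s$. A coarse median space is a triple $(X,d,\mu)$ with $(X,d)$ a metric space and $\mu\colon X^3\to X$ satisfying: (M1) $\mu(a,a,b)=a$; (M2) $\mu(a_1,a_2,a_3)$ is invariant under permutations of its arguments; (C1) there is an affine $\rho(t)=Kt+H_0$ with $d(\mu(a,b,c),\mu(a',b',c'))\leqslant\rho(d(a,a')+d(b,b')+d(c,c'))$ for all points; (C2) there is $H\colon\mathbb N\to[0,\infty)$ such that for every finite $A\subseteq X$ with $1\leqslant|A|\leqslant p$ there are a finite median algebra $(\Pi,\mu_\Pi)$ and maps $\pi\colon A\to\Pi$, $\lambda\colon\Pi\to X$ with $\lambda\mu_\Pi(x,y,z)\sim_{H(p)}\mu(\lambda x,\lambda y,\lambda z)$ for all $x,y,z\in\Pi$ and $\lambda\pi a\sim_{H(p)}a$ for all $a\in A$. (A median algebra is a set with a ternary operation $m$ satisfying $m(a,a,b)=a$, full symmetry, and $m(m(a,b,c),b,d)=m(a,b,m(c,b,d))$; its rank is the supremum of $k$ such that it contains a subalgebra isomorphic to $(\mathbb Z_2)^k$ with coordinatewise majority vote.) ''Rank at most $n$ is achieved under parameters $\rho,H$'' means $\rho,H$ satisfy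 (C1),(C2) and for every finite $A$ as in (C2) one can choose $(\Pi,\pi,\lambda)$ as in (C2) with $\Pi$ of rank at most $n$ and $\lambda\circ\pi$ equal to the inclusion $A\hookrightarrow X$. The interval is $[a,b]=\{\mu(a,y,b):y\in X\}$, and $\mathcal N_\zeta(S)=\{y\in X:\exists s\in S,\ d(y,s)\leqslant\zeta\}$. *)

(* Defs.v *)
From Stdlib Require Import Reals List.
From mathcomp Require Import all_boot.
Set Implicit Arguments. Unset Strict Implicit. Unset Printing Implicit Defensive.

Local Open Scope R_scope.

Definition is_metric (X : Type) (d : X -> X -> R) : Prop :=
  (forall x y, d x y = 0 <-> x = y) /\
  (forall x y, d x y = d y x) /\
  (forall x y z, d x z <= d x y + d y z).

Definition near_s (X : Type) (d : X -> X -> R) (s : R) (x y : X) : Prop :=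
  d x y <= s.

Definition median_algebra (T : Type) (m : T -> T -> T -> T) : Prop :=
  (forall a b, m a a b = a) /\
  (forall a b c,
      m a b c = m a c b /\ m a b c = m b a c /\ m a b c = m b c a /\
      m a b c = m c a b /\ m a b c = m c b a) /\
  (forall a b c e, m (m a b c) b e = m a b (m c b e)).

Definition cube (k : nat) : finType := {ffun 'I_k -> bool}.
Definition majority (b1 b2 b3 : bool) : bool :=
  (b1 && b2) || (b2 && b3) || (b1 && b3).
Definition cube_median (k : nat) (x y z : cube k) : cube k :=
  [ffun i => majority (x i) (y i) (z i)].

(* P contains a median subalgebra isomorphic to (Z_2)^k: an injective
   median homomorphism from the cube (its image is then a subalgebra). *)
Definition has_cube (P : Type) (m : P -> P -> P -> P) (k : nat) : Prop :=
  exists f : cube k -> P,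
    injective f /\
    (forall x y z, f (cube_median x y z) = m (f x) (f y) (f z)).

Definition rank_le (P : Type) (m : P -> P -> P -> P) (n : nat) : Prop :=
  forall k : nat, has_cube m k -> (k <= n)%N.

Definition M1 (X : Type) (mu : X -> X -> X -> X) : Prop :=
  forall a b, mu a a b = a.
Definition M2 (X : Type) (mu : X -> X -> X -> X) : Prop :=
  forall a b c,
      mu a b c = mu a c b /\ mu a b c = mu b a c /\ mu a b c = mu b c a /\
      mu a b c = mu c a b /\ mu a b c = mu c b a.

(* (C1) with the affine function rho(t) = K t + H0 *)
Definition C1 (X : Type) (d : X -> X -> R) (mu : X -> X -> X -> X)
  (K H0 : R) : Prop :=
  forall a b c a' b' c',
    d (mu a b c) (mu a' b' c') <= K * (d a a' + d b b' + d c c') + H0.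

(* Approximating data for a finite set A (a duplicate-free list) with
   1 <= |A| <= p. [exact] requires lambda o pi = inclusion on A;
   [rk] optionally bounds the rank. *)
Definition approx_data (X : Type) (d : X -> X -> R) (mu : X -> X -> X -> X)
  (Hp : R) (A : list X) (rk : option nat) (exact : bool) : Prop :=
  exists (P : finType) (m : P -> P -> P -> P) (pi : X -> P) (lam : P -> X),
    median_algebra m /\
    (match rk with Some n => rank_le m n | None => True end) /\
    (forall x y z : P, near_s d Hp (lam (m x y z)) (mu (lam x) (lam y) (lam z))) /\
    (forall a, In a A -> near_s d Hp (lam (pi a)) a) /\
    (if exact then forall a, In a A -> lam (pi a) = a else True).

Definition C2 (X : Type) (d : X -> X -> R) (mu : X -> X -> X -> X)
  (H : nat -> R) : Prop :=
  (forall p, 0 <= H p) /\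
  forall (p : nat) (A : list X), NoDup A -> (1 <= length A)%nat ->
    (length A <= p)%nat -> approx_data d mu (H p) A None false.

Definition rank_achieved (X : Type) (d : X -> X -> R) (mu : X -> X -> X -> X)
  (n : nat) (K H0 : R) (H : nat -> R) : Prop :=
  C1 d mu K H0 /\ C2 d mu H /\
  forall (p : nat) (A : list X), NoDup A -> (1 <= length A)%nat ->
    (length A <= p)%nat -> approx_data d mu (H p) A (Some n) true.

Definition interval (X : Type) (mu : X -> X -> X -> X) (a b : X) : X -> Prop :=
  fun x => exists y, x = mu a y b.
Definition nbhd (X : Type) (d : X -> X -> R) (zeta : R) (S : X -> Prop) : X -> Prop :=
  fun y => exists s, S s /\ d y s <= zeta.

(* Main.v *)
Require Import Defs.
From Stdlib Require Import Reals List Classical Lra Lia.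
From mathcomp Require Import all_boot.
Lemma ma_core (P : finType) (m : P -> P -> P -> P) (hm : median_algebra m)
  (a b c x : P) :
  m a (m a x b) c = m a x b \/ m c (m a x b) b = m a x b \/ has_cube m 2.
Proof.
case: hm => [Hmaj [Hs HA]].
have p12 : forall a b c, m a b c = m b a c by move=> a0 b0 c0; case: (Hs a0 b0 c0) => [_ []].
have p23 : forall a b c, m a b c = m a c b by move=> a0 b0 c0; case: (Hs a0 b0 c0).
have p13 : forall a b c, m a b c = m c b a by move=> a0 b0 c0; case: (Hs a0 b0 c0) => [_ [_ [_ []]]].
have maba : forall a b, m a b a = a by move=> a0 b0; rewrite p23 Hmaj.
have mbaa : forall a b, m b a a = a by move=> a0 b0; rewrite p13 Hmaj.
have int : forall a x b, m a (m a x b) b = m a x b.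
  move=> a0 x0 b0; rewrite (p12 a0 x0 b0) (p12 a0 (m x0 a0 b0) b0) HA maba //.
have allp : forall a b c r, m a b c = r ->
  m a b c = r /\ m a c b = r /\ m b a c = r /\ m b c a = r /\ m c a b = r /\ m c b a = r.
  move=> a0 b0 c0 r <-.
  have q1 := p23 a0 b0 c0. have q2 := p12 a0 b0 c0. have q3 := p12 b0 a0 c0.
  have q4 := p23 b0 a0 c0. have q5 := p13 a0 b0 c0. have q6 := p23 c0 b0 a0.
  repeat split; congruence.
set p := m a x b.
have hp : m a p b = p by rewrite /p int.
case: (eqVneq (m a p c) p) => hu; first by left.
case: (eqVneq (m c p b) p) => hv; first by right; left.
right; right.
set u := m a p c.  set v := m b p c.  set w := m u c v.
have hv' : v <> p by move=> e; move/eqP: hv; apply; rewrite -p13.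
have hu' : u <> p by move=> e; move/eqP: hu; apply.
have E1 : m u p v = p.
  rewrite /u /v HA (p13 b p c) -(HA c p c b) maba (p13 c p b) -(HA a p b c) hp Hmaj //.
have E2' : m p u c = u by rewrite /u (p12 a p c) int.
have E2 : m p u w = u by rewrite /w (p12 u c v) -(HA p u c v) E2' Hmaj.
have E4' : m c v p = v by rewrite /v (p12 b p c) (p13 c (m p b c) p) int.
have E4 : m w v p = v by rewrite /w (p23 u c v) (HA u v c p) E4' mbaa.
have E3 : m u w v = w by rewrite /w int.
have Nuv : u <> v by move=> e; apply: hu'; rewrite -{1}E1 -e maba.
have Nuw : u <> w by move=> e; apply: hv'; rewrite -{1}E4 -e -(p23 u p v) E1.
have Nwv : w <> v by move=> e; apply: hu'; rewrite -{1}E2 e (p12 p u v) E1.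
have Npw : p <> w by move=> e; apply: hu'; rewrite -{1}E2 -e maba.
case: (allp _ _ _ _ E1) => [E1a [E1b [E1c [E1d [E1e E1f]]]]].
case: (allp _ _ _ _ E2) => [E2a [E2b [E2c [E2d [E2e E2f]]]]].
case: (allp _ _ _ _ E3) => [E3a [E3b [E3c [E3d [E3e E3f]]]]].
case: (allp _ _ _ _ E4) => [E4a [E4b [E4c [E4d [E4e E4f]]]]].
pose g (b0 b1 : bool) := match b0, b1 with
  | false, false => p | true, false => u | true, true => w | false, true => v end.
exists (fun z : cube 2 => g (z ord0) (z ord_max)); split.
- move=> z1 z2 /= e.
  have [e0 e1] : z1 ord0 = z2 ord0 /\ z1 ord_max = z2 ord_max.
    move: e; rewrite /g.
    case: (z1 ord0); case: (z1 ord_max); case: (z2 ord0); case: (z2 ord_max) => //= e;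
      try congruence.
  apply/ffunP => i; case: i => [[|[|k]] Hk].
  + by have -> : Ordinal Hk = ord0 by apply: val_inj.
  + by have -> : Ordinal Hk = ord_max by apply: val_inj.
  + by [].
- move=> z1 z2 z3; rewrite !ffunE /g /majority.
  case: (z1 ord0); case: (z1 ord_max); case: (z2 ord0); case: (z2 ord_max);
  case: (z3 ord0); case: (z3 ord_max) => /=;
  first [ by rewrite ?Hmaj ?maba ?mbaa | congruence ].
Qed.

Lemma dedup_ex (X : Type) (l : list X) :
  exists l', NoDup l' /\ (forall x, In x l -> In x l') /\ (length l' <= length l)%nat.
Proof.
elim: l => [|x l [l' [h1 [h2 h3]]]].
  by exists nil; split; [constructor | split => //=].
case: (classic (In x l')) => hx.
  exists l'; split => //; split; last by simpl; apply/leP; move/leP: h3; lia.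
  by move=> y /= [<-|/h2].
exists (x :: l'); split; first by constructor.
split; last by simpl; apply/leP; move/leP: h3; lia.
by move=> y /= [<-|/h2]; [left|right].
Qed.

Local Open Scope R_scope.

Theorem lemma4p5 (X : Type) (d : X -> X -> R) (mu : X -> X -> X -> X)
  (K H0 : R) (H : nat -> R)
  (hd : is_metric d) (hM1 : M1 mu) (hM2 : M2 mu)
  (hrank : rank_achieved d mu 1 K H0 H)
  (zeta : R) (hzeta : 0 <= zeta) :
  let zeta' := 2 * H 4%nat + zeta in
  forall a b c y : X,
    nbhd d zeta (interval mu a b) y ->
    nbhd d zeta' (interval mu a c) y \/ nbhd d zeta' (interval mu c b) y.
Proof.
move=> zeta' a b c y [s [[w ->] hys]].
case: hd => [_ [dsym dtri]].
case: hrank => [_ [_ hr]].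
case: (@dedup_ex X (a :: b :: c :: w :: nil)) => [A [hnd [hin hlen]]].
have ina : In a A by apply: hin; left.
have inb : In b A by apply: hin; right; left.
have inc : In c A by apply: hin; right; right; left.
have inw : In w A by apply: hin; right; right; right; left.
have hl1 : (1 <= length A)%nat.
  by case: A hnd {hin hlen inb inc inw} ina => [//|? ? _ _].
case: (hr 4%nat A hnd hl1 hlen) => [P [m [pi [lam [hm [hrk [hnear [_ hex]]]]]]]].
have Ha := hex a ina. have Hb := hex b inb. have Hc := hex c inc. have Hw := hex w inw.
set p := m (pi a) (pi w) (pi b).
have hs : d (mu a w b) (lam p) <= H 4%nat.
  rewrite dsym; move: (hnear (pi a) (pi w) (pi b)); rewrite /near_s Ha Hb Hw //.
case: (@ma_core P m hm (pi a) (pi b) (pi c) (pi w)) => [e|[e|hc]].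
- left; exists (mu a (lam p) c); split; first by exists (lam p).
  have h2 : d (lam p) (mu a (lam p) c) <= H 4%nat.
    move: (hnear (pi a) p (pi c)); rewrite /near_s -/p e Ha Hc //.
  have := dtri y (mu a w b) (mu a (lam p) c).
  have := dtri (mu a w b) (lam p) (mu a (lam p) c).
  rewrite /zeta'; lra.
- right; exists (mu c (lam p) b); split; first by exists (lam p).
  have h2 : d (lam p) (mu c (lam p) b) <= H 4%nat.
    move: (hnear (pi c) p (pi b)); rewrite /near_s -/p e Hb Hc //.
  have := dtri y (mu a w b) (mu c (lam p) b).
  have := dtri (mu a w b) (lam p) (mu c (lam p) b).
  rewrite /zeta'; lra.
- by have := hrk 2%nat hc.
Qed.
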